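(* In the standing setting below, assume in addition that $\rho$ satisfies $$\partial_t\rho+\frac1r\partial_r(r\rho v)=\frac{k_\rho\, w}{w+K_{w\rho}}\,f\Big(1-\frac{\rho}{\rho_m}\Big)-\lambda_\rho\rho\quad\text{in } R(t)<r<L,\ 0<t<T,$$ where $k_\rho>0$, $K_{w\rho}>0$, $\lambda_\rho>0$, $\rho_m>1$ are constants and $w\ge0$, $f\ge 0$ are given continuous functions on $\Omega_T$. If $\rho(r,0)<\rho_m$ for all $R_0\le r\le L$, then $\rho<\rho_m$ in $\Omega_T$.
   Context: Standing setting. Fix constants $L>0$, $0<R_0<L$, $\beta>0$, $T>0$. Let $R\in C^1([0,T))$ with $R(0)=R_0$ and $0<R(t)<L$, and set $\Omega_T=\{(r,t): R(t)\le r\le L,\ 0\le t<T\}$. Let $\rho\ge 0$ be a classical (continuously differentiable) function on $\Omega_T$ (the matrix density), and define the pressure $P(r,t)=P(\rho(r,t))$ where $P(\rho)=\beta(\rho-1)$ for $\rho\ge1$ and $P(\rho)=0$ for $\rho<1$. Let $v(r,t)$ be a classical function on $\Omega_T$ (twice continuously differentiable in $r$) satisfying $\frac1r\partial_r(r\,\partial_r v)-\frac{v}{r^2}=\partial_r P$ for $R(t)<r<L$, with $v(L,t)=0$, $\partial_r v(R(t),t)=P(R(t),t)$, and the free-boundary law $\dot R(t)=v(R(t),t)$. Define $Q(t)=\int_{R(t)}^L y\,P(y,t)\,dy$. *)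

(* Defs.v *)
From Stdlib Require Import Reals Lra.
Open Scope R_scope.

Definition Pfun (beta x : R) : R := if Rle_dec 1 x then beta * (x - 1) else 0.

Definition OmegaT (Rb : R -> R) (L T r t : R) : Prop :=
  0 <= t < T /\ Rb t <= r <= L.

Definition deriv_within (D : R -> Prop) (g : R -> R) (l x : R) : Prop :=
  forall eps, 0 < eps -> exists delta, 0 < delta /\
    forall y, D y -> y <> x -> Rabs (y - x) < delta ->
      Rabs ((g y - g x) / (y - x) - l) < eps.

Definition cont_within (D : R -> Prop) (g : R -> R) (x : R) : Prop :=
  forall eps, 0 < eps -> exists delta, 0 < delta /\
    forall y, D y -> Rabs (y - x) < delta -> Rabs (g y - g x) < eps.

Definition cont2_within (D : R -> R -> Prop) (g : R -> R -> R) (x t : R) : Prop :=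
  forall eps, 0 < eps -> exists delta, 0 < delta /\
    forall y s, D y s -> Rabs (y - x) < delta -> Rabs (s - t) < delta ->
      Rabs (g y s - g x t) < eps.

(* Main.v *)
Require Import Defs.
From Stdlib Require Import Reals Lra Classical.
Open Scope R_scope.

Definition clamp (a b y : R) : R := Rmax a (Rmin b y).

Lemma clamp_in a b y : a <= b -> a <= clamp a b y <= b.
Proof. intros; unfold clamp, Rmax, Rmin; repeat destruct Rle_dec; lra. Qed.

Lemma clamp_id a b y : a <= y <= b -> clamp a b y = y.
Proof. intros; unfold clamp, Rmax, Rmin; repeat destruct Rle_dec; lra. Qed.

Lemma clamp_dist a b x y : a <= x <= b -> Rabs (clamp a b y - x) <= Rabs (y - x).
Proof.
  intros; unfold clamp, Rmax, Rmin; repeat destruct Rle_dec;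
  unfold Rabs; repeat destruct Rcase_abs; lra.
Qed.

Lemma cpt_plus f g x : continuity_pt f x -> continuity_pt g x ->
  continuity_pt (fun y => f y + g y) x.
Proof. intros; apply (continuity_pt_plus f g); auto. Qed.
Lemma cpt_minus f g x : continuity_pt f x -> continuity_pt g x ->
  continuity_pt (fun y => f y - g y) x.
Proof. intros; apply (continuity_pt_minus f g); auto. Qed.
Lemma cpt_mult f g x : continuity_pt f x -> continuity_pt g x ->
  continuity_pt (fun y => f y * g y) x.
Proof. intros; apply (continuity_pt_mult f g); auto. Qed.
Lemma cpt_inv f x : continuity_pt f x -> f x <> 0 ->
  continuity_pt (fun y => / f y) x.
Proof. intros; apply (continuity_pt_inv f); auto. Qed.
Lemma cpt_div f g x : continuity_pt f x -> continuity_pt g x -> g x <> 0 ->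
  continuity_pt (fun y => f y / g y) x.
Proof. intros; apply (continuity_pt_div f g); auto. Qed.
Lemma cpt_const c x : continuity_pt (fun _ => c) x.
Proof. apply continuity_pt_const; intros a b; reflexivity. Qed.

Lemma cpt_eps f x : (forall eps, 0 < eps -> exists d, 0 < d /\
  forall y, Rabs (y - x) < d -> Rabs (f y - f x) < eps) -> continuity_pt f x.
Proof.
  intros H eps Heps. destruct (H eps Heps) as [d [Hd Hy]].
  exists d; split; [lra|]. intros y [_ Hy2]. simpl in *. unfold R_dist in *. auto.
Qed.

Lemma cw_clamp D g a b x : a <= b -> (forall y, a <= y <= b -> D y) -> a <= x <= b ->
  cont_within D g x -> continuity_pt (fun y => g (clamp a b y)) x.
Proof.
  intros Hab HD Hx Hc. apply cpt_eps. intros eps Heps.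
  destruct (Hc eps Heps) as [d [Hd Hy]]. exists d; split; auto.
  intros y Hyx. rewrite (clamp_id a b x Hx). apply Hy.
  - apply HD, clamp_in; auto.
  - eapply Rle_lt_trans; [apply clamp_dist; auto| auto].
Qed.

Lemma c2_r (D : R -> R -> Prop) g a b x t : a <= b -> (forall y, a <= y <= b -> D y t) ->
  a <= x <= b -> cont2_within D g x t -> continuity_pt (fun y => g (clamp a b y) t) x.
Proof.
  intros Hab HD Hx Hc. apply (cw_clamp (fun y => D y t) (fun y => g y t)); auto.
  intros eps Heps. destruct (Hc eps Heps) as [d [Hd Hy]]. exists d; split; auto.
  intros y Dy Hyx. apply Hy; auto. rewrite Rminus_diag, Rabs_R0; auto.
Qed.

Lemma c2_t (D : R -> R -> Prop) g a b x t : a <= b -> (forall s, a <= s <= b -> D x s) ->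
  a <= t <= b -> cont2_within D g x t -> continuity_pt (fun s => g x (clamp a b s)) t.
Proof.
  intros Hab HD Hx Hc. apply (cw_clamp (fun s => D x s) (fun s => g x s)); auto.
  intros eps Heps. destruct (Hc eps Heps) as [d [Hd Hy]]. exists d; split; auto.
  intros y Dy Hyx. apply Hy; auto. rewrite Rminus_diag, Rabs_R0; auto.
Qed.

Lemma dw_lim D g l x d0 : 0 < d0 -> (forall y, Rabs (y - x) < d0 -> D y) ->
  deriv_within D g l x -> derivable_pt_lim g x l.
Proof.
  intros Hd0 HD Hw eps Heps. destruct (Hw eps Heps) as [d [Hd Hy]].
  assert (Hm : 0 < Rmin d d0) by (apply Rmin_pos; auto).
  exists (mkposreal _ Hm). intros h Hh Hhd. simpl in Hhd.
  assert (E : x + h - x = h) by ring.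
  specialize (Hy (x + h)). rewrite E in Hy. apply Hy.
  - apply HD. rewrite E. eapply Rlt_le_trans; [apply Hhd| apply Rmin_r].
  - intro C. apply Hh. lra.
  - eapply Rlt_le_trans; [apply Hhd| apply Rmin_l].
Qed.

Lemma dw_cont D g l x : deriv_within D g l x -> cont_within D g x.
Proof.
  intros Hw eps Heps. destruct (Hw 1 Rlt_0_1) as [d [Hd Hy]].
  set (d' := Rmin d (eps / (Rabs l + 1))).
  assert (Hl : 0 < Rabs l + 1) by (pose proof (Rabs_pos l); lra).
  assert (Hd' : 0 < d') by (apply Rmin_pos; auto; apply Rdiv_lt_0_compat; auto).
  exists d'; split; auto. intros y Dy Hyx.
  destruct (Req_dec y x) as [->|Hne].
  - rewrite Rminus_diag, Rabs_R0; auto.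
  - assert (Hq := Hy y Dy Hne (Rlt_le_trans _ _ _ Hyx (Rmin_l _ _))).
    set (q := (g y - g x) / (y - x)) in *.
    assert (E : g y - g x = q * (y - x)) by (unfold q; field; lra).
    rewrite E, Rabs_mult.
    assert (Hq2 : Rabs q < Rabs l + 1).
    { pose proof (Rabs_triang_inv q l). lra. }
    assert (Hy2 : Rabs (y - x) < eps / (Rabs l + 1)) by
      (eapply Rlt_le_trans; [apply Hyx| apply Rmin_r]).
    apply Rle_lt_trans with ((Rabs l + 1) * Rabs (y - x)).
    + apply Rmult_le_compat_r; [apply Rabs_pos| lra].
    + apply Rlt_le_trans with ((Rabs l + 1) * (eps / (Rabs l + 1))).
      * apply Rmult_lt_compat_l; auto.
      * right; field; lra.
Qed.

Lemma dw_left_max D g l x d0 : 0 < d0 -> deriv_within D g l x ->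
  (forall y, x - d0 < y < x -> D y /\ g y <= g x) -> 0 <= l.
Proof.
  intros Hd0 Hw Hy. destruct (Rle_or_lt 0 l) as [|Hl]; auto.
  destruct (Hw (- l)) as [d [Hd Hd2]]; [lra|].
  assert (Hm : 0 < Rmin d d0) by (apply Rmin_pos; auto).
  pose proof (Rmin_l d d0); pose proof (Rmin_r d d0).
  set (y := x - Rmin d d0 / 2).
  destruct (Hy y) as [Dy Hg]; [unfold y; lra|].
  assert (Hab : Rabs (y - x) < d) by (unfold y; rewrite Rabs_left; lra).
  specialize (Hd2 y Dy ltac:(unfold y; lra) Hab).
  assert (0 <= (g y - g x) / (y - x)).
  { replace ((g y - g x) / (y - x)) with ((g x - g y) * / (x - y)) by (field; unfold y; lra).
    apply Rmult_le_pos; [lra|]. left; apply Rinv_0_lt_compat; unfold y; lra. }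
  apply Rabs_def2 in Hd2. lra.
Qed.

Lemma dw_right_max D g l x d0 : 0 < d0 -> deriv_within D g l x ->
  (forall y, x < y < x + d0 -> D y /\ g y <= g x) -> l <= 0.
Proof.
  intros Hd0 Hw Hy. destruct (Rle_or_lt l 0) as [|Hl]; auto.
  destruct (Hw l) as [d [Hd Hd2]]; [lra|].
  assert (Hm : 0 < Rmin d d0) by (apply Rmin_pos; auto).
  pose proof (Rmin_l d d0); pose proof (Rmin_r d d0).
  set (y := x + Rmin d d0 / 2).
  destruct (Hy y) as [Dy Hg]; [unfold y; lra|].
  assert (Hab : Rabs (y - x) < d) by (unfold y; rewrite Rabs_right; lra).
  specialize (Hd2 y Dy ltac:(unfold y; lra) Hab).
  assert ((g y - g x) / (y - x) <= 0).
  { replace ((g y - g x) / (y - x)) with (- ((g x - g y) * / (y - x))) by (field; unfold y; lra).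
    assert (0 <= (g x - g y) * / (y - x)); [|lra].
    apply Rmult_le_pos; [lra|]. left; apply Rinv_0_lt_compat; unfold y; lra. }
  apply Rabs_def2 in Hd2. lra.
Qed.

Lemma dlim_local f g x l d : 0 < d -> (forall y, Rabs (y - x) < d -> f y = g y) ->
  derivable_pt_lim f x l -> derivable_pt_lim g x l.
Proof.
  intros Hd He Hf eps Heps. destruct (Hf eps Heps) as [dl Hdl].
  assert (Hm : 0 < Rmin dl d) by (apply Rmin_pos; auto; apply cond_pos).
  exists (mkposreal _ Hm). intros h Hh Hhd. simpl in Hhd.
  pose proof (Rmin_l dl d); pose proof (Rmin_r dl d).
  rewrite <- (He x), <- (He (x + h)).
  - apply Hdl; auto; lra.
  - replace (x + h - x) with h by ring; lra.
  - rewrite Rminus_diag, Rabs_R0; auto.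
Qed.

Lemma mvt_c F F' a b : a < b ->
  (forall x, a <= x <= b -> continuity_pt (fun y => F (clamp a b y)) x) ->
  (forall x, a < x < b -> derivable_pt_lim F x (F' x)) ->
  exists c, a < c < b /\ F b - F a = F' c * (b - a).
Proof.
  intros Hab Hc Hd.
  set (G := fun y => F (clamp a b y)).
  assert (HG : forall c, a < c < b -> derivable_pt_lim G c (F' c)).
  { intros c Hc2. apply (dlim_local F G c (F' c) (Rmin (c - a) (b - c))).
    - apply Rmin_pos; lra.
    - intros y Hy. unfold G. rewrite clamp_id; auto.
      pose proof (Rmin_l (c - a) (b - c)); pose proof (Rmin_r (c - a) (b - c)).
      apply Rabs_def2 in Hy. lra.
    - apply Hd; auto. }
  destruct (MVT G id a b (fun c P => exist _ (F' c) (HG c P)) (fun c _ => derivable_pt_id c) Hab)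
    as [c [P HP]].
  - exact Hc.
  - intros; apply derivable_continuous_pt, derivable_pt_id.
  - exists c; split; auto. simpl in HP. rewrite derive_pt_id in HP.
    unfold G, id in HP. rewrite !clamp_id in HP by lra. lra.
Qed.

Lemma zero_ext h a b x : a < b -> a <= x <= b -> continuity_pt h x ->
  (forall y, a < y < b -> h y = 0) -> h x = 0.
Proof.
  intros Hab Hx Hc Hz. apply NNPP; intro Hne.
  assert (He : 0 < Rabs (h x)) by (apply Rabs_pos_lt; auto).
  destruct (Hc _ He) as [d [Hd Hy]].
  assert (Hm : 0 < Rmin (d / 2) ((b - a) / 4)) by (apply Rmin_pos; lra).
  pose proof (Rmin_l (d / 2) ((b - a) / 4)); pose proof (Rmin_r (d / 2) ((b - a) / 4)).
  set (m := Rmin (d / 2) ((b - a) / 4)) in *.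
  destruct (Rle_or_lt x ((a + b) / 2)) as [Hxm|Hxm].
  - specialize (Hy (x + m)). rewrite Hz in Hy by lra. simpl in Hy. unfold R_dist in Hy.
    rewrite Rminus_0_l, Rabs_Ropp in Hy. apply (Rlt_irrefl (Rabs (h x))), Hy.
    split; [unfold D_x, no_cond; split; auto; lra|].
    replace (x + m - x) with m by ring. rewrite Rabs_right; lra.
  - specialize (Hy (x - m)). rewrite Hz in Hy by lra. simpl in Hy. unfold R_dist in Hy.
    rewrite Rminus_0_l, Rabs_Ropp in Hy. apply (Rlt_irrefl (Rabs (h x))), Hy.
    split; [unfold D_x, no_cond; split; auto; lra|].
    replace (x - m - x) with (- m) by ring. rewrite Rabs_Ropp, Rabs_right; lra.
Qed.

Lemma Pfun_lip beta x y : 0 < beta -> Rabs (Pfun beta x - Pfun beta y) <= beta * Rabs (x - y).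
Proof.
  intros Hb. unfold Pfun. destruct (Rle_dec 1 x), (Rle_dec 1 y);
  unfold Rabs; repeat destruct Rcase_abs; nra.
Qed.

Lemma Pfun_cont beta x : 0 < beta -> continuity_pt (Pfun beta) x.
Proof.
  intros Hb. apply cpt_eps. intros eps Heps. exists (eps / beta). split.
  - apply Rdiv_lt_0_compat; auto.
  - intros y Hy. eapply Rle_lt_trans; [apply Pfun_lip; auto|].
    apply Rmult_lt_compat_l with (r := beta) in Hy; auto.
    replace (beta * (eps / beta)) with eps in Hy by (field; lra). auto.
Qed.

Lemma Pfun_mono beta x y : 0 < beta -> x <= y -> Pfun beta x <= Pfun beta y.
Proof. intros; unfold Pfun; destruct (Rle_dec 1 x), (Rle_dec 1 y); nra. Qed.

Lemma Pfun_ge1 beta x : 1 <= x -> Pfun beta x = beta * (x - 1).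
Proof. intros; unfold Pfun; destruct (Rle_dec 1 x); lra. Qed.

Lemma cpt_Pfun beta g x : 0 < beta -> continuity_pt g x ->
  continuity_pt (fun y => Pfun beta (g y)) x.
Proof.
  intros Hb Hg. apply (continuity_pt_comp g (Pfun beta)); auto. apply Pfun_cont; auto.
Qed.

Lemma cpt_clamp p q x : p <= q -> p <= x <= q -> continuity_pt (fun y => clamp p q y) x.
Proof.
  intros Hpq Hx. apply cpt_eps. intros eps Heps. exists eps; split; auto.
  intros y Hy. rewrite (clamp_id p q x Hx). eapply Rle_lt_trans; [apply clamp_dist|]; auto.
Qed.

Lemma dpl_plus f g x l1 l2 : derivable_pt_lim f x l1 -> derivable_pt_lim g x l2 ->
  derivable_pt_lim (fun y => f y + g y) x (l1 + l2).
Proof. intros; apply (derivable_pt_lim_plus f g); auto. Qed.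
Lemma dpl_minus f g x l1 l2 : derivable_pt_lim f x l1 -> derivable_pt_lim g x l2 ->
  derivable_pt_lim (fun y => f y - g y) x (l1 - l2).
Proof. intros; apply (derivable_pt_lim_minus f g); auto. Qed.
Lemma dpl_mult f g x l1 l2 : derivable_pt_lim f x l1 -> derivable_pt_lim g x l2 ->
  derivable_pt_lim (fun y => f y * g y) x (l1 * g x + f x * l2).
Proof. intros; apply (derivable_pt_lim_mult f g); auto. Qed.
Lemma dpl_div f g x l1 l2 : derivable_pt_lim f x l1 -> derivable_pt_lim g x l2 -> g x <> 0 ->
  derivable_pt_lim (fun y => f y / g y) x ((l1 * g x - l2 * f x) / (g x)²).
Proof. intros; apply (derivable_pt_lim_div f g); auto. Qed.
Lemma dpl_id x : derivable_pt_lim (fun y => y) x 1.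
Proof. apply derivable_pt_lim_id. Qed.
Lemma dpl_eq f x l l' : l = l' -> derivable_pt_lim f x l -> derivable_pt_lim f x l'.
Proof. intros ->; auto. Qed.
Lemma cpt_opp f x : continuity_pt f x -> continuity_pt (fun y => - f y) x.
Proof. intros; apply (continuity_pt_opp f); auto. Qed.

Theorem lemma4p3
  (L R0 beta T : R) (Rb Rdot : R -> R)
  (rho drho_r drho_t v dv_r dv_rr dP w f : R -> R -> R)
  (k_rho K_wrho lambda_rho rho_m : R)
  (* constants *)
  (HL : 0 < L) (HR0 : 0 < R0 < L) (Hbeta : 0 < beta) (HT : 0 < T)
  (* R in C^1([0,T)), R(0) = R0, 0 < R(t) < L *)
  (HRb0 : Rb 0 = R0)
  (HRb_range : forall t, 0 <= t < T -> 0 < Rb t < L)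
  (HRb_deriv : forall t, 0 <= t < T -> deriv_within (fun s => 0 <= s < T) Rb (Rdot t) t)
  (HRdot_cont : forall t, 0 <= t < T -> cont_within (fun s => 0 <= s < T) Rdot t)
  (* rho >= 0, classical C^1 on Omega_T *)
  (Hrho_nonneg : forall r t, OmegaT Rb L T r t -> 0 <= rho r t)
  (Hrho_cont : forall r t, OmegaT Rb L T r t -> cont2_within (OmegaT Rb L T) rho r t)
  (Hrho_r_cont : forall r t, OmegaT Rb L T r t -> cont2_within (OmegaT Rb L T) drho_r r t)
  (Hrho_t_cont : forall r t, OmegaT Rb L T r t -> cont2_within (OmegaT Rb L T) drho_t r t)
  (Hrho_r : forall r t, OmegaT Rb L T r t ->
     deriv_within (fun y => OmegaT Rb L T y t) (fun y => rho y t) (drho_r r t) r)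
  (Hrho_t : forall r t, OmegaT Rb L T r t ->
     deriv_within (fun s => OmegaT Rb L T r s) (fun s => rho r s) (drho_t r t) t)
  (* v classical on Omega_T, twice continuously differentiable in r *)
  (Hv_cont : forall r t, OmegaT Rb L T r t -> cont2_within (OmegaT Rb L T) v r t)
  (Hv_r_cont : forall r t, OmegaT Rb L T r t -> cont2_within (OmegaT Rb L T) dv_r r t)
  (Hv_rr_cont : forall r t, OmegaT Rb L T r t -> cont2_within (OmegaT Rb L T) dv_rr r t)
  (Hv_r : forall r t, OmegaT Rb L T r t ->
     deriv_within (fun y => OmegaT Rb L T y t) (fun y => v y t) (dv_r r t) r)
  (Hv_rr : forall r t, OmegaT Rb L T r t ->
     deriv_within (fun y => OmegaT Rb L T y t) (fun y => dv_r y t) (dv_rr r t) r)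
  (* elliptic equation for v: (1/r)(r v_r)_r - v/r^2 = d_r P, for R(t) < r < L *)
  (HP_r : forall r t, 0 <= t < T -> Rb t < r < L ->
     derivable_pt_lim (fun y => Pfun beta (rho y t)) r (dP r t))
  (Hv_eq : forall r t, 0 <= t < T -> Rb t < r < L ->
     / r * (dv_r r t + r * dv_rr r t) - v r t / r ^ 2 = dP r t)
  (Hv_L : forall t, 0 <= t < T -> v L t = 0)
  (Hv_R : forall t, 0 <= t < T -> dv_r (Rb t) t = Pfun beta (rho (Rb t) t))
  (HRdot : forall t, 0 <= t < T -> Rdot t = v (Rb t) t)
  (* additional hypotheses of the lemma *)
  (Hk : 0 < k_rho) (HK : 0 < K_wrho) (Hlam : 0 < lambda_rho) (Hrhom : 1 < rho_m)
  (Hw_nonneg : forall r t, OmegaT Rb L T r t -> 0 <= w r t)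
  (Hf_nonneg : forall r t, OmegaT Rb L T r t -> 0 <= f r t)
  (Hw_cont : forall r t, OmegaT Rb L T r t -> cont2_within (OmegaT Rb L T) w r t)
  (Hf_cont : forall r t, OmegaT Rb L T r t -> cont2_within (OmegaT Rb L T) f r t)
  (* rho_t + (1/r) d_r (r rho v) = k w/(w+K) f (1 - rho/rho_m) - lambda rho *)
  (Hrho_eq : forall r t, 0 < t < T -> Rb t < r < L ->
     drho_t r t + / r * (rho r t * v r t + r * drho_r r t * v r t + r * rho r t * dv_r r t)
     = k_rho * w r t / (w r t + K_wrho) * f r t * (1 - rho r t / rho_m)
       - lambda_rho * rho r t)
  (Hinit : forall r, R0 <= r <= L -> rho r 0 < rho_m) :
  forall r t, OmegaT Rb L T r t -> rho r t < rho_m.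
Proof.
  intros r0 t0 H0.
  destruct (Rlt_or_le (rho r0 t0) rho_m) as [ok|Hbad0]; [exact ok| exfalso].
  assert (HRc : forall t, 0 <= t < T -> cont_within (fun s => 0 <= s < T) Rb t)
    by (intros t Ht; eapply dw_cont; eauto).
  set (BadP := fun r t => 0 <= t < T /\ Rb t <= r <= L /\ rho_m <= rho r t).
  set (LB := fun x => forall r t, BadP r t -> x <= t).
  destruct H0 as [[Ht00 Ht0T] [Hr0a Hr0b]].
  destruct (completeness LB) as [ts [Hub Hlub]].
  { exists t0. intros x Hx. apply (Hx r0). unfold BadP; repeat split; lra. }
  { exists 0. intros r t [Ht _]; lra. }
  assert (T1 : forall r t, BadP r t -> ts <= t).
  { intros r t Ht. apply Hlub. intros x Hx. apply (Hx r t Ht). }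
  assert (T2 : forall e, 0 < e -> exists r t, BadP r t /\ t < ts + e).
  { intros e He. apply NNPP; intro N.
    assert (LB (ts + e)).
    { intros r t Ht. apply Rnot_lt_le. intro. apply N. eauto. }
    specialize (Hub _ H). lra. }
  assert (ts0 : 0 <= ts) by (apply Hub; intros r t [Ht _]; lra).
  assert (tsT : ts <= t0) by (apply (T1 r0); unfold BadP; repeat split; lra).
  set (E2 := fun x => forall e, 0 < e -> exists r t, BadP r t /\ t < ts + e /\ x <= r).
  destruct (completeness E2) as [rs [Hub2 Hlub2]].
  { exists L. intros x Hx. destruct (Hx 1 Rlt_0_1) as [r [t [[? [[? ?] ?]] [? ?]]]]. lra. }
  { exists 0. intros e He. destruct (T2 e He) as [r [t [Hb Ht]]]. exists r, t.
    split; [auto|split; [auto|]]. destruct Hb as [Ht1 [Hr1 _]]. pose proof (HRb_range t Ht1). lra. }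
  assert (K : forall d, 0 < d -> exists r t, BadP r t /\ ts <= t < ts + d /\ rs - d < r < rs + d).
  { intros d Hd.
    assert (Hn : ~ E2 (rs + d / 2)) by (intro Hx; specialize (Hub2 _ Hx); lra).
    unfold E2 in Hn. apply not_all_ex_not in Hn. destruct Hn as [e0 He0].
    apply imply_to_and in He0. destruct He0 as [He0 Hn].
    assert (Hx : exists x, E2 x /\ rs - d / 2 < x).
    { apply NNPP; intro N.
      assert (is_upper_bound E2 (rs - d / 2)).
      { intros x Hx. apply Rnot_lt_le. intro. apply N. eauto. }
      specialize (Hlub2 _ H). lra. }
    destruct Hx as [x [Hx Hxr]].
    destruct (Hx (Rmin e0 d)) as [r [t [Hb [Ht Hxr2]]]]; [apply Rmin_pos; auto|].
    pose proof (Rmin_l e0 d); pose proof (Rmin_r e0 d).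
    exists r, t. split; auto. pose proof (T1 r t Hb). split; [lra|].
    split; [lra|]. apply Rnot_le_lt. intro. apply Hn. exists r, t. split; auto. split; lra. }
  assert (tsT2 : ts < T) by lra.
  assert (HRts := HRb_range ts (conj ts0 tsT2)).
  assert (rsL : rs <= L).
  { apply Rnot_lt_le; intro. destruct (K (rs - L)) as [r [t [[_ [[_ ?] _]] [_ ?]]]]; lra. }
  assert (rsR : Rb ts <= rs).
  { apply Rnot_lt_le; intro Hlt. set (g := Rb ts - rs).
    destruct (HRc ts (conj ts0 tsT2) (g / 2)) as [d [Hd Hdd]]; [unfold g; lra|].
    destruct (K (Rmin d (g / 2))) as [r [t [[Ht [[Hr1 _] _]] [Htt Hrr]]]];
      [apply Rmin_pos; unfold g; lra|].
    pose proof (Rmin_l d (g / 2)); pose proof (Rmin_r d (g / 2)).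
    assert (Hab : Rabs (t - ts) < d) by (rewrite Rabs_right; lra).
    specialize (Hdd t Ht Hab). apply Rabs_def2 in Hdd. unfold g in *; lra. }
  assert (Oms : OmegaT Rb L T rs ts) by (repeat split; lra).
  assert (rhors : rho_m <= rho rs ts).
  { apply Rnot_lt_le; intro Hlt.
    destruct (Hrho_cont rs ts Oms (rho_m - rho rs ts)) as [d [Hd Hdd]]; [lra|].
    destruct (K d Hd) as [r [t [[Ht [Hr Hrh]] [Htt Hrr]]]].
    assert (Om1 : OmegaT Rb L T r t) by (split; auto).
    specialize (Hdd r t Om1 ltac:(apply Rabs_def1; lra) ltac:(apply Rabs_def1; lra)).
    apply Rabs_def2 in Hdd. lra. }
  assert (ts_pos : 0 < ts).
  { destruct ts0 as [|E0]; auto. subst ts. exfalso.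
    assert (R0 <= rs <= L) by (rewrite <- HRb0; lra). specialize (Hinit rs H). lra. }
  assert (Before : forall s r, 0 <= s < ts -> Rb s <= r <= L -> rho r s < rho_m).
  { intros s r Hs Hr. apply Rnot_le_lt; intro. assert (BadP r s) by (repeat split; lra).
    specialize (T1 r s H0). lra. }
  assert (Hle : forall r, Rb ts <= r <= L -> rho r ts <= rho_m).
  { intros r Hr. apply Rnot_lt_le; intro Hlt.
    assert (Omr : OmegaT Rb L T r ts) by (repeat split; lra).
    destruct (Hrho_cont r ts Omr (rho r ts - rho_m)) as [d [Hd Hdd]]; [lra|].
    destruct (HRc ts (conj ts0 tsT2) (d / 2)) as [d2 [Hd2 Hdd2]]; [lra|].
    set (h := Rmin (Rmin d d2) ts / 2).
    assert (Hh : 0 < Rmin (Rmin d d2) ts) by (repeat apply Rmin_pos; auto).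
    pose proof (Rmin_l (Rmin d d2) ts); pose proof (Rmin_r (Rmin d d2) ts);
    pose proof (Rmin_l d d2); pose proof (Rmin_r d d2).
    set (s := ts - h).
    assert (Hs : 0 <= s < T) by (unfold s, h; lra).
    specialize (Hdd2 s Hs ltac:(unfold s, h; rewrite Rabs_left; lra)).
    apply Rabs_def2 in Hdd2.
    pose proof (HRb_range s Hs).
    assert (Om2 : OmegaT Rb L T (Rmax r (Rb s)) s).
    { split; auto. split; [apply Rmax_r|]. apply Rmax_lub; lra. }
    specialize (Hdd _ _ Om2).
    assert (Hbs : rho (Rmax r (Rb s)) s < rho_m).
    { apply Before; [unfold s, h; lra|]. split; [apply Rmax_r|]. apply Rmax_lub; lra. }
    assert (Rabs (Rmax r (Rb s) - r) < d).
    { unfold Rmax; destruct Rle_dec; [|rewrite Rminus_diag, Rabs_R0; auto].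
      rewrite Rabs_right; lra. }
    specialize (Hdd H4 ltac:(unfold s, h; rewrite Rabs_left; lra)).
    apply Rabs_def2 in Hdd. lra. }
  assert (rhoeq : rho rs ts = rho_m) by (apply Rle_antisym; auto).
  remember (Rb ts) as a eqn:Ha.
  assert (Sl : forall y, a <= y <= L -> OmegaT Rb L T y ts) by (intros y Hy; repeat split; lra).
  set (Pm := beta * (rho_m - 1)).
  assert (Pm_pos : 0 < Pm) by (unfold Pm; nra).
  assert (PleP : forall y, a <= y <= L -> Pfun beta (rho y ts) <= Pm).
  { intros y Hy. unfold Pm. rewrite <- Pfun_ge1 by lra. apply Pfun_mono; auto. }
  assert (Hnb : forall x, a < x < L -> forall y, Rabs (y - x) < Rmin (x - a) (L - x) ->
             OmegaT Rb L T y ts).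
  { intros x Hx y Hy. pose proof (Rmin_l (x - a) (L - x)); pose proof (Rmin_r (x - a) (L - x)).
    apply Rabs_def2 in Hy. apply Sl. lra. }
  assert (Dv : forall x, a < x < L -> derivable_pt_lim (fun y => v y ts) x (dv_r x ts)).
  { intros x Hx. apply (dw_lim (fun y => OmegaT Rb L T y ts) _ _ _ (Rmin (x - a) (L - x))).
    - apply Rmin_pos; lra.
    - apply Hnb; auto.
    - apply Hv_r, Sl; lra. }
  assert (Dvr : forall x, a < x < L -> derivable_pt_lim (fun y => dv_r y ts) x (dv_rr x ts)).
  { intros x Hx. apply (dw_lim (fun y => OmegaT Rb L T y ts) _ _ _ (Rmin (x - a) (L - x))).
    - apply Rmin_pos; lra.
    - apply Hnb; auto.
    - apply Hv_rr, Sl; lra. }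
  Ltac ccpt Om := repeat first
    [ apply cpt_const
    | apply cpt_minus | apply cpt_plus | apply cpt_opp | apply cpt_div | apply cpt_mult | apply cpt_inv
    | apply cpt_Pfun; [assumption|]
    | apply cpt_clamp
    | match goal with |- continuity_pt (fun y => ?g (clamp ?p ?q y) ?t) ?x =>
          apply (c2_r Om g p q x t) end ].
  set (Dfun := fun y => dv_r y ts + v y ts / y - Pfun beta (rho y ts)).
  assert (Dc : forall p q x, a <= p <= q -> q <= L -> p <= x <= q ->
            continuity_pt (fun y => Dfun (clamp p q y)) x).
  { intros p q x Hp Hq Hx. unfold Dfun. ccpt (OmegaT Rb L T).
    all: try (rewrite clamp_id by lra); try lra; try (intros; apply Sl; lra);
      try (first [apply Hrho_cont|apply Hrho_r_cont|apply Hrho_t_cont|apply Hv_cont|apply Hv_r_cont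
                 |apply Hv_rr_cont|apply Hw_cont|apply Hf_cont]; apply Sl; lra). }
  assert (Dd : forall x, a < x < L -> derivable_pt_lim Dfun x 0).
  { intros x Hx. unfold Dfun.
    assert (Hx0 : x <> 0) by lra.
    eapply dpl_eq; [|apply dpl_minus; [apply dpl_plus; [apply Dvr; auto|
         apply dpl_div; [apply Dv; auto| apply dpl_id| auto]] | apply HP_r; [lra| lra]]].
    pose proof (Hv_eq x ts ltac:(lra) ltac:(lra)) as He.
    rewrite <- He. unfold Rsqr. field. auto. }
  assert (Dconst : forall x, a <= x <= L -> Dfun x = Dfun a).
  { intros x Hx. destruct (Req_dec x a) as [->|Hne]; auto.
    destruct (mvt_c Dfun (fun _ => 0) a x) as [c [Hc Hcc]]; [lra| | |].
    - intros y Hy. apply Dc; lra.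
    - intros y Hy. apply Dd; lra.
    - lra. }
  assert (Da : Dfun a = v a ts / a).
  { unfold Dfun. rewrite Ha, Hv_R by lra. ring. }
  assert (Dpos : - Pm < Dfun a).
  { apply Rnot_le_lt; intro Hneg.
    destruct (mvt_c (fun y => y * v y ts) (fun y => 1 * v y ts + y * dv_r y ts) a L)
      as [c [Hc Hcc]]; [lra| | |].
    - intros x Hx. ccpt (OmegaT Rb L T).
      all: try (rewrite clamp_id by lra); try lra; try (intros; apply Sl; lra);
      try (first [apply Hrho_cont|apply Hrho_r_cont|apply Hrho_t_cont|apply Hv_cont|apply Hv_r_cont
                 |apply Hv_rr_cont|apply Hw_cont|apply Hf_cont]; apply Sl; lra).
    - intros x Hx. eapply dpl_eq; [|apply dpl_mult; [apply dpl_id| apply Dv; auto]]. simpl. ring.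
    - rewrite Hv_L in Hcc by lra.
      assert (HDc := Dconst c ltac:(lra)).
      assert (HPc := PleP c ltac:(lra)).
      assert (E1 : 1 * v c ts + c * dv_r c ts = c * (Dfun a + Pfun beta (rho c ts)))
        by (rewrite <- HDc; unfold Dfun; field; lra).
      rewrite E1 in Hcc.
      assert (c * (Dfun a + Pfun beta (rho c ts)) <= 0).
      { assert (Dfun a + Pfun beta (rho c ts) <= 0) by lra. nra. }
      assert (0 <= a * v a ts) by nra.
      assert (0 <= v a ts) by nra.
      rewrite Da in Hneg.
      assert (0 <= v a ts / a) by (unfold Rdiv; apply Rmult_le_pos; [lra| left; apply Rinv_0_lt_compat; lra]). lra. }
  set (Efun := fun y => drho_t y ts + / y * (rho y ts * v y ts + y * drho_r y ts * v y ts
      + y * rho y ts * dv_r y ts) - (k_rho * w y ts / (w y ts + K_wrho) * f y ts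
      * (1 - rho y ts / rho_m) - lambda_rho * rho y ts)).
  assert (aL : a < L) by lra.
  assert (E0 : Efun rs = 0).
  { assert (Hz := zero_ext (fun y => Efun (clamp a L y)) a L rs aL ltac:(lra)).
    simpl in Hz. rewrite clamp_id in Hz by lra. apply Hz.
    - unfold Efun. ccpt (OmegaT Rb L T).
      all: try (rewrite clamp_id by lra); try lra; try (intros; apply Sl; lra);
      try (first [apply Hrho_cont|apply Hrho_r_cont|apply Hrho_t_cont|apply Hv_cont|apply Hv_r_cont
                 |apply Hv_rr_cont|apply Hw_cont|apply Hf_cont]; apply Sl; lra).
      pose proof (Hw_nonneg rs ts ltac:(apply Sl; lra)). lra.
    - intros y Hy. rewrite clamp_id by lra. unfold Efun.
      rewrite Hrho_eq by lra. ring. }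
  assert (Dr : - Pm < Dfun rs) by (rewrite Dconst by lra; auto).
  assert (Xneg : drho_t rs ts + v rs ts * drho_r rs ts < 0).
  { unfold Efun in E0. unfold Dfun in Dr. rewrite rhoeq in E0, Dr.
    assert (Pfun beta rho_m = Pm) by (apply Pfun_ge1; lra). rewrite H in Dr.
    assert (rs0 : rs <> 0) by lra.
    assert (E3 : drho_t rs ts + v rs ts * drho_r rs ts
       = - lambda_rho * rho_m - rho_m * (dv_r rs ts + v rs ts / rs)).
    { rewrite <- (Rminus_0_r (drho_t rs ts + v rs ts * drho_r rs ts)), <- E0.
      field. split; [lra|]. pose proof (Hw_nonneg rs ts Oms). lra. }
    rewrite E3. assert (0 < dv_r rs ts + v rs ts / rs) by lra. nra. }
  assert (Rt_left : forall r, a < r <= L -> rho r ts = rho_m -> 0 <= drho_t r ts).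
  { intros r Hr Hreq.
    destruct (HRc ts (conj ts0 tsT2) (r - a)) as [d [Hd Hdd]]; [lra|].
    apply (dw_left_max (fun s => OmegaT Rb L T r s) (fun s => rho r s) _ ts (Rmin d ts)).
    - apply Rmin_pos; auto.
    - apply Hrho_t. apply Sl; lra.
    - intros s Hs. pose proof (Rmin_l d ts); pose proof (Rmin_r d ts).
      assert (Hs0 : 0 <= s < T) by lra.
      specialize (Hdd s Hs0 ltac:(rewrite Rabs_left; lra)). apply Rabs_def2 in Hdd.
      split; [repeat split; lra|].
      left. rewrite Hreq. apply Before; lra. }
  destruct (Req_dec rs L) as [HrL|HrL].
  { rewrite HrL in Xneg. rewrite Hv_L in Xneg by lra.
    assert (0 <= drho_t L ts) by (apply Rt_left; [lra| rewrite <- HrL; auto]). lra. }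
  destruct (Req_dec rs a) as [Hra|Hra].
  2: { assert (Hrs : a < rs < L) by lra.
       assert (0 <= drho_t rs ts) by (apply Rt_left; [lra| auto]).
       assert (Hr0 : drho_r rs ts = 0).
       { apply Rle_antisym.
         - apply (dw_right_max (fun y => OmegaT Rb L T y ts) (fun y => rho y ts) _ rs (L - rs));
             [lra| apply Hrho_r; auto|].
           intros y Hy. split; [apply Sl; lra|]. rewrite rhoeq. apply Hle; lra.
         - apply (dw_left_max (fun y => OmegaT Rb L T y ts) (fun y => rho y ts) _ rs (rs - a));
             [lra| apply Hrho_r; auto|].
           intros y Hy. split; [apply Sl; lra|]. rewrite rhoeq. apply Hle; lra. }
       rewrite Hr0 in Xneg. lra. }
  subst rs.
  assert (HV : Rdot ts = v a ts) by (rewrite HRdot by lra; rewrite Ha; auto).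
  set (A := drho_t a ts) in *. set (B := drho_r a ts) in *. set (V := Rdot ts) in *.
  rewrite <- HV in Xneg.
  set (eta := - (A + V * B) / 2).
  assert (eta_pos : 0 < eta) by (unfold eta; lra).
  assert (HB1 : 0 < Rabs B + 1) by (pose proof (Rabs_pos B); lra).
  set (eps := eta / (Rabs B + 1)).
  assert (eps_pos : 0 < eps) by (unfold eps; apply Rdiv_lt_0_compat; auto).
  assert (HBe : Rabs B * eps < eta).
  { unfold eps. replace (Rabs B * (eta / (Rabs B + 1))) with (eta * (Rabs B / (Rabs B + 1)))
      by (field; lra).
    assert (Rabs B / (Rabs B + 1) < 1).
    { apply Rmult_lt_reg_r with (Rabs B + 1); auto. unfold Rdiv.
      rewrite Rmult_assoc, Rinv_l by lra. lra. }
    nra. }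
  set (k := eps - V).
  set (C1 := Rabs V + 1).
  set (C := C1 + Rabs k + 1).
  assert (C1_pos : 0 < C1) by (unfold C1; pose proof (Rabs_pos V); lra).
  assert (HkC : Rabs k < C) by (unfold C; lra).
  assert (HC1C : C1 < C) by (unfold C; pose proof (Rabs_pos k); lra).
  assert (C_pos : 0 < C) by lra.
  set (e1 := eta / (3 * C + 2)).
  assert (e1_pos : 0 < e1) by (unfold e1; apply Rdiv_lt_0_compat; lra).
  assert (He1 : e1 * (3 * C + 2) = eta) by (unfold e1; field; lra).
  destruct (HRdot_cont ts (conj ts0 tsT2) 1 Rlt_0_1) as [d1 [Hd1 Hdd1]].
  destruct (HRb_deriv ts (conj ts0 tsT2) eps eps_pos) as [d2 [Hd2 Hdd2]].
  change (Rdot ts) with V in Hdd1, Hdd2.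
  destruct (Hrho_r_cont a ts Oms e1 e1_pos) as [d3 [Hd3 Hdd3]].
  destruct (Hrho_t_cont a ts Oms e1 e1_pos) as [d4 [Hd4 Hdd4]].
  set (m := Rmin (Rmin (Rmin ts d1) (Rmin d2 (d3 / (C + 1))))
                 (Rmin (d4 / (C + 1)) ((L - a) / (C + 1)))).
  assert (m_pos : 0 < m).
  { unfold m. repeat apply Rmin_pos; auto; apply Rdiv_lt_0_compat; lra. }
  assert (m1 : m <= ts /\ m <= d1 /\ m <= d2 /\ m <= d3 / (C + 1) /\ m <= d4 / (C + 1)
               /\ m <= (L - a) / (C + 1)).
  { unfold m. repeat match goal with |- context [Rmin ?x ?y] =>
      pose proof (Rmin_l x y); pose proof (Rmin_r x y); generalize dependent (Rmin x y) end.
    intros; lra. }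
  destruct m1 as [m_ts [m_d1 [m_d2 [m_d3 [m_d4 m_L]]]]].
  set (h := m / 2).
  assert (h_pos : 0 < h) by (unfold h; lra).
  assert (hC3 : (C + 1) * h < d3).
  { apply Rmult_le_compat_l with (r := C + 1) in m_d3; [|lra].
    replace ((C + 1) * (d3 / (C + 1))) with d3 in m_d3 by (field; lra). unfold h; nra. }
  assert (hC4 : (C + 1) * h < d4).
  { apply Rmult_le_compat_l with (r := C + 1) in m_d4; [|lra].
    replace ((C + 1) * (d4 / (C + 1))) with d4 in m_d4 by (field; lra). unfold h; nra. }
  assert (hCL : (C + 1) * h < L - a).
  { apply Rmult_le_compat_l with (r := C + 1) in m_L; [|lra].
    replace ((C + 1) * ((L - a) / (C + 1))) with (L - a) in m_L by (field; lra). unfold h; nra. }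
  set (s := ts - h).
  assert (s_rng : 0 < s < ts) by (unfold s, h; lra).
  set (r1 := a + k * h). set (M := a + C * h).
  assert (Hs0 : 0 <= s < T) by lra.
  assert (F1 : Rb s < r1).
  { assert (Hsne : s <> ts) by lra.
    specialize (Hdd2 s Hs0 Hsne ltac:(unfold s; rewrite Rabs_left; unfold h; lra)).
    apply Rabs_def2 in Hdd2. rewrite <- Ha in Hdd2.
    set (q := (Rb s - a) / (s - ts)) in *.
    assert (Eq : Rb s - a = q * (- h)) by (unfold q, s; field; lra).
    assert (q - (V - eps) > 0) by lra.
    assert ((q - (V - eps)) * h > 0) by (apply Rmult_gt_0_compat; lra).
    unfold r1, k. nra. }
  assert (kC : k * h < C * h).
  { apply Rmult_lt_compat_r; auto. pose proof (Rle_abs k). lra. }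
  assert (Habsk : Rabs (k * h) <= C * h).
  { rewrite Rabs_mult, (Rabs_right h) by lra. apply Rmult_le_compat_r; lra. }
  assert (ML : M < L) by (unfold M; nra).
  assert (r1M : r1 < M) by (unfold r1, M; lra).
  assert (F2 : forall tau, s <= tau <= ts -> Rb tau < M).
  { intros tau Htau. destruct (Req_dec tau ts) as [->|Hne].
    - rewrite <- Ha. unfold M. nra.
    - destruct (mvt_c Rb Rdot tau ts) as [c [Hc Hcc]]; [lra| | |].
      + intros x Hx. apply (cw_clamp (fun s0 => 0 <= s0 < T)); try lra.
        * intros; lra.
        * apply HRc; lra.
      + intros x Hx. apply (dw_lim (fun s0 => 0 <= s0 < T) _ _ _ (Rmin x (T - x))).
        * apply Rmin_pos; lra.
        * intros y Hy. pose proof (Rmin_l x (T - x)); pose proof (Rmin_r x (T - x)).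
          apply Rabs_def2 in Hy. lra.
        * apply HRb_deriv; lra.
      + specialize (Hdd1 c ltac:(lra) ltac:(rewrite Rabs_left; unfold s, h in *; lra)).
        apply Rabs_def2 in Hdd1. rewrite <- Ha in Hcc.
        assert (C1 = Rabs V + 1) by (unfold C1; lra). pose proof (Rle_abs (- V)) as HV2.
        rewrite Rabs_Ropp in HV2.
        assert (- C1 < Rdot c) by lra.
        assert (ts - tau <= h) by (unfold s in Htau; lra).
        assert (Rdot c * (ts - tau) >= - C1 * h) by nra.
        unfold M. nra. }
  assert (HMdef : M = a + C * h) by reflexivity. assert (Hr1def : r1 = a + k * h) by reflexivity. assert (Hsdef : s = ts - h) by reflexivity.
  assert (Ch : 0 < C * h) by (apply Rmult_lt_0_compat; lra).
  assert (Sls : forall y, r1 <= y <= M -> OmegaT Rb L T y s) by (intros y Hy; repeat split; lra).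
  assert (SlM : forall tau, s <= tau <= ts -> OmegaT Rb L T M tau).
  { intros tau Ht. pose proof (F2 tau Ht). repeat split; lra. }
  assert (Sla : forall y, a <= y <= M -> OmegaT Rb L T y ts) by (intros y Hy; apply Sl; lra).
  destruct (mvt_c (fun y => rho y s) (fun y => drho_r y s) r1 M) as [x1 [Hx1 E1]]; [lra| | |].
  { intros x Hx. apply (c2_r (OmegaT Rb L T) rho r1 M x s); try lra; auto; try (apply Hrho_cont; auto). }
  { intros x Hx. apply (dw_lim (fun y => OmegaT Rb L T y s) _ _ _ (Rmin (x - r1) (M - x))).
    - apply Rmin_pos; lra.
    - intros y Hy. pose proof (Rmin_l (x - r1) (M - x)); pose proof (Rmin_r (x - r1) (M - x)).
      apply Rabs_def2 in Hy. apply Sls; lra.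
    - apply Hrho_r, Sls; lra. }
  destruct (mvt_c (fun tau => rho M tau) (fun tau => drho_t M tau) s ts) as [x2 [Hx2 E2']]; [lra| | |].
  { intros x Hx. apply (c2_t (OmegaT Rb L T) rho s ts M x); try lra; auto; try (apply Hrho_cont; auto). }
  { intros x Hx. apply (dw_lim (fun tau => OmegaT Rb L T M tau) _ _ _ (Rmin (x - s) (ts - x))).
    - apply Rmin_pos; lra.
    - intros y Hy. pose proof (Rmin_l (x - s) (ts - x)); pose proof (Rmin_r (x - s) (ts - x)).
      apply Rabs_def2 in Hy. apply SlM; lra.
    - apply Hrho_t, SlM; lra. }
  destruct (mvt_c (fun y => rho y ts) (fun y => drho_r y ts) a M) as [x3 [Hx3 E3]]; [lra| | |].
  { intros x Hx. apply (c2_r (OmegaT Rb L T) rho a M x ts); try lra; auto; try (apply Hrho_cont; auto). }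
  { intros x Hx. apply (dw_lim (fun y => OmegaT Rb L T y ts) _ _ _ (Rmin (x - a) (M - x))).
    - apply Rmin_pos; lra.
    - intros y Hy. pose proof (Rmin_l (x - a) (M - x)); pose proof (Rmin_r (x - a) (M - x)).
      apply Rabs_def2 in Hy. apply Sla; lra.
    - apply Hrho_r, Sla; lra. }
  assert (hd : (C + 1) * h = C * h + h) by ring.
  assert (B1 := Hdd3 x1 s (Sls x1 ltac:(lra))).
  assert (B1' : Rabs (x1 - a) < d3) by 
    (assert (-(C*h) <= k*h) by (pose proof (Rle_abs (-(k*h))) as Q; rewrite Rabs_Ropp in Q; lra);
     apply Rabs_def1; lra).
  assert (B1'' : Rabs (s - ts) < d3) by (apply Rabs_def1; unfold s; lra).
  specialize (B1 B1' B1''). change (drho_r a ts) with B in B1. apply Rabs_def2 in B1.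
  assert (B2 := Hdd4 M x2 (SlM x2 ltac:(lra))).
  assert (B2' : Rabs (M - a) < d4) by (apply Rabs_def1; unfold M; lra).
  assert (B2'' : Rabs (x2 - ts) < d4) by (apply Rabs_def1; unfold s in *; lra).
  specialize (B2 B2' B2''). change (drho_t a ts) with A in B2. apply Rabs_def2 in B2.
  assert (B3 := Hdd3 x3 ts (Sla x3 ltac:(lra))).
  assert (B3' : Rabs (x3 - a) < d3) by (apply Rabs_def1; unfold M in *; lra).
  assert (B3'' : Rabs (ts - ts) < d3) by (rewrite Rminus_diag, Rabs_R0; lra).
  specialize (B3 B3' B3''). change (drho_r a ts) with B in B3. apply Rabs_def2 in B3.
  assert (Hb : rho r1 s < rho_m) by (apply Before; lra).
  rewrite <- rhoeq in Hb.
  assert (Hsh : ts - s = h) by (unfold s; ring).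
  assert (HMr : M - r1 = (C - k) * h) by (unfold M, r1; ring).
  assert (HMa : M - a = C * h) by (unfold M; ring).
  rewrite Hsh in E2'. rewrite HMr in E1. rewrite HMa in E3.
  assert (Ck : 0 < C - k) by (pose proof (Rle_abs k); lra).
  assert (I1 : drho_r x1 s * (C - k) <= (B + e1) * (C - k)) by (apply Rmult_le_compat_r; lra).
  assert (I3 : (B - e1) * C <= drho_r x3 ts * C) by (apply Rmult_le_compat_r; lra).
  assert (I : 0 < drho_r x3 ts * C - drho_t M x2 - drho_r x1 s * (C - k)).
  { assert (Bk : B * k - A > eta).
    { unfold k. pose proof (Rle_abs B). pose proof (Rle_abs (- B)). rewrite Rabs_Ropp in *.
      assert (B * eps >= - (Rabs B * eps)) by nra.
      unfold eta in *. lra. }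
    assert (e1 * (2 * C - k + 1) < eta).
    { rewrite <- He1. apply Rmult_lt_compat_l; auto. pose proof (Rle_abs (- k)).
      rewrite Rabs_Ropp in *. lra. }
    nra. }
  assert (0 < (drho_r x3 ts * C - drho_t M x2 - drho_r x1 s * (C - k)) * h) by (apply Rmult_lt_0_compat; auto).
  nra.
Qed.
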